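(* Let $G$ be a finite abelian group and $A$ a finite dimensional $G$-graded algebra with a regular grading with bicharacter $\beta$ whose regular decomposition is minimal. Let $A=D_1\oplus\cdots\oplus D_k\oplus J(A)$ (vector space direct sum) where $D_1,\dots,D_k$ are graded subalgebras with $D_iD_j=0$ for $i\ne j$, each $D_i$ graded-isomorphic to $K^\alpha G$ for a 2-cocycle $\alpha$ inducing $\beta$. Then each $D_i$ is a (central) simple algebra, so this is an ordinary Wedderburn–Malcev decomposition of $A$, and $D_i\,J(A)\,D_j=0$ for all $1\le i\ne j\le k$.
   Context: All algebras are associative with unit over an algebraically closed field $K$ of characteristic $0$; $G$ is finite abelian, written additively. A $G$-graded algebra $A$ has a regular grading if (i) for every $n$ and every $(g_1,\dots,g_n)\in G^n$ there exist $a_i\in A_{g_i}$ with $a_1\cdots a_n\ne0$, and (ii) there is $\beta\colon G\times G\to K^*$ with $a_ga_h=\beta(g,h)a_ha_g$ for all homogeneous $a_g\in A_g,a_h\in A_h$ ($\beta$ = bicharacter of $A$). The regular decomposition is minimal if there do not exist $g\neq h$ in $G$ with $\beta(x,g)=\beta(x,h)$ for all $x\in G$. For a 2-cocycle $\alpha$, $K^\alpha G$ has basis $\{X_g\}$ with $X_gX_h=\alpha(g,h)X_{g+h}$ and grading $(K^\alpha G)_g=KX_g$; $\alpha$ induces $\beta$ if $\beta(g,h)=\alpha(g,h)\alpha(h,g)^{-1}$. $J(A)$ denotes the Jacobson radical. *)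

(* Defs.v *)
From HB Require Import structures.
From mathcomp Require Import all_boot all_order all_algebra all_field.
Set Implicit Arguments. Unset Strict Implicit. Unset Printing Implicit Defensive.
Import GRing.Theory.
Local Open Scope ring_scope.

Section Defs.
Variables (K : fieldType) (G : finZmodType) (A : falgType K).

Definition is_grading (Ag : G -> {vspace A}) : Prop :=
  [/\ (\sum_(g : G) Ag g)%VS = fullv,
      directv (\sum_(g : G) Ag g)%VS
    & forall g h, (Ag g * Ag h <= Ag (g + h)%R)%VS].

Definition regular_grading (Ag : G -> {vspace A}) (beta : G -> G -> K) : Prop :=
  [/\ is_grading Ag,
      (forall (n : nat) (gs : 'I_n -> G), exists a : 'I_n -> A,
          (forall i, a i \in Ag (gs i)) /\ \prod_(i < n) a i != 0),
      (forall g h, beta g h != 0)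
    & (forall g h a b, a \in Ag g -> b \in Ag h -> a * b = beta g h *: (b * a))].

Definition minimal_regular (beta : G -> G -> K) : Prop :=
  ~ exists g h : G, g != h /\ forall x, beta x g = beta x h.

Definition cocycle (alpha : G -> G -> K) : Prop :=
  (forall g h, alpha g h != 0) /\
  (forall g h l, alpha g h * alpha (g + h) l = alpha h l * alpha g (h + l)).

Definition induces (alpha beta : G -> G -> K) : Prop :=
  forall g h, beta g h = alpha g h / alpha h g.

(* Graded subalgebra (not necessarily containing 1 of A). *)
Definition graded_subalgebra (Ag : G -> {vspace A}) (D : {vspace A}) : Prop :=
  (D * D <= D)%VS /\ D = (\sum_(g : G) (D :&: Ag g))%VS.

(* D is graded-isomorphic to K^alpha G: an algebra isomorphism
   K^alpha G -> D mapping K X_g into D_g = D :&: A_g; equivalently the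
   images X g of the basis {X_g} form a basis of D, are homogeneous of
   degree g, and multiply via X_g X_h = alpha(g,h) X_(g+h). *)
Definition graded_iso_twisted (Ag : G -> {vspace A}) (D : {vspace A})
    (alpha : G -> G -> K) : Prop :=
  exists X : G -> A,
    [/\ forall g, X g \in (D :&: Ag g)%VS,
        basis_of D [seq X g | g <- enum G]
      & forall g h, X g * X h = alpha g h *: X (g + h)].

Definition left_ideal (L : {vspace A}) : Prop := (fullv * L <= L)%VS.

Definition maximal_left_ideal (L : {vspace A}) : Prop :=
  [/\ left_ideal L, L != fullv &
      forall L' : {vspace A}, left_ideal L' -> (L <= L')%VS -> L' != fullv -> L' = L].

Definition is_jacobson_radical (J : {vspace A}) : Prop :=
  forall x : A, x \in J <-> (forall L, maximal_left_ideal L -> x \in L).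

Definition ideal_of (D I : {vspace A}) : Prop :=
  [/\ (I <= D)%VS, (D * I <= I)%VS & (I * D <= I)%VS].

Definition simple_subalgebra (D : {vspace A}) : Prop :=
  [/\ (D * D <= D)%VS, (D * D)%VS != 0%VS &
      forall I, ideal_of D I -> I = 0%VS \/ I = D].

Definition central_simple_subalgebra (D : {vspace A}) : Prop :=
  simple_subalgebra D /\ \dim 'Z(D)%VS = 1%N.

End Defs.

(* Main.v *)
Require Import Defs.
From HB Require Import structures.
From mathcomp Require Import all_boot all_order all_algebra all_field.
From mathcomp Require Import ring.
Import GRing.Theory.
Local Open Scope ring_scope.

Section Aux.
Variables (K : fieldType) (G : finZmodType) (A : falgType K).
Variables (Ag : G -> {vspace A}) (beta : G -> G -> K).
Hypothesis hgr : is_grading Ag.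
Hypothesis hcomm : forall g h a b, a \in Ag g -> b \in Ag h -> a * b = beta g h *: (b * a).
Hypothesis hmin : minimal_regular beta.

Lemma central0 (hb0 : forall g, beta 0 g = 1) z : z \in Ag 0 -> forall a, z * a = a * z.
Proof.
move=> hz a; case: hgr => hsum _ _.
have : a \in (\sum_(g : G) Ag g)%VS by rewrite hsum memvf.
case/memv_sumP => vs hvs ->.
rewrite mulr_sumr mulr_suml; apply: eq_bigr => g _.
by rewrite (hcomm _ _ _ _ hz (hvs g isT)) hb0 scale1r.
Qed.

Lemma triple_zero (U V W : {vspace A}) :
  (forall u v w, u \in U -> v \in V -> w \in W -> u * v * w = 0) ->
  (U * V * W <= 0)%VS.
Proof.
move=> H; apply/prodvP => x w hx hw.
have : (U * V <= lker (amulr w))%VS.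
  apply/prodvP => u v hu hv; rewrite memv_ker lfunE /=.
  by rewrite (H u v w hu hv hw).
move/subvP/(_ x hx); rewrite memv_ker lfunE /= => /eqP ->.
exact: mem0v.
Qed.

Variables (D : {vspace A}) (alpha : G -> G -> K) (X : G -> A).
Hypotheses (hcoc : cocycle alpha) (hind : induces alpha beta)
  (hXD : forall g, X g \in (D :&: Ag g)%VS)
  (hbas : basis_of D [seq X g | g <- enum G])
  (hmul : forall g h, X g * X h = alpha g h *: X (g + h)).

Lemma alpha0l l : alpha 0 l = alpha 0 0.
Proof.
case: hcoc => hnz hc; have := hc 0 0 l; rewrite !add0r.
by move/(mulIf (hnz 0 l)).
Qed.

Lemma alpha0r g : alpha g 0 = alpha 0 0.
Proof.
case: hcoc => hnz hc; have := hc g 0 0; rewrite !addr0.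
by move/(mulIf (hnz g 0)).
Qed.

Lemma beta0l g : beta 0 g = 1.
Proof. by rewrite hind alpha0l alpha0r divff //; case: hcoc. Qed.

Lemma beta0r g : beta g 0 = 1.
Proof. by rewrite hind alpha0l alpha0r divff //; case: hcoc. Qed.

Lemma XD g : X g \in D. Proof. by case/memv_capP: (hXD g). Qed.
Lemma XA g : X g \in Ag g. Proof. by case/memv_capP: (hXD g). Qed.
Lemma Xneq0 g : X g != 0.
Proof.
apply: (free_not0 (basis_free hbas)); apply: map_f; exact: mem_enum.
Qed.

Lemma expand x : x \in D -> exists c : G -> K, x = \sum_(g : G) c g *: X g.
Proof.
case/andP: hbas => /eqP hspan _.
rewrite -hspan span_def big_map big_enum /= => /memv_sumP[vs hvs ->].
have : forall g, exists k, vs g = k *: X g by move=> g; apply/vlineP/hvs.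
case/fin_all_exists => c hc; exists c; apply: eq_bigr => g _; exact: hc.
Qed.

Lemma uniq0 c : \sum_(g : G) c g *: X g = 0 -> forall g, c g = 0.
Proof.
case: hgr => _ hdir _ hs g.
move/directv_sum_independent: hdir => hI.
move: (hI (fun g => c g *: X g) (fun g _ => rpredZ _ (XA g)) hs g isT) => /eqP.
by rewrite scaler_eq0 (negbTE (Xneq0 g)) orbF => /eqP.
Qed.

Lemma uniq0s c s : \sum_(g : G) c g *: X (g + s) = 0 -> forall g, c g = 0.
Proof.
rewrite (reindex_inj (addIr (- s))) /= => H g.
have H' : \sum_(i : G) c (i - s) *: X i = 0.
  by rewrite -[RHS]H; apply: eq_bigr => i _; rewrite subrK.
by have := @uniq0 (fun i => c (i - s)) H' (g + s); rewrite addrK.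
Qed.


Lemma mulX0 d : d \in D -> d * X 0 = alpha 0 0 *: d.
Proof.
case/expand => c ->; rewrite mulr_suml scaler_sumr; apply: eq_bigr => g _.
by rewrite -scalerAl hmul addr0 alpha0r !scalerA mulrC.
Qed.

Lemma supp_ind (I : {vspace A}) (hI : ideal_of D I) n :
  forall (c : G -> K) s, (#|[set g | c g != 0%R]| <= n)%N ->
  \sum_(g : G) c g *: X (g + s) \in I -> (exists g, c g != 0) ->
  exists g, X g \in I.
Proof.
case: hI => hID hDI hIDr.
elim: n => [|n IH] c s hcard hx [g0 hg0].
  move: hcard; rewrite leqn0 cards_eq0 => /eqP S0.
  have : g0 \in [set g | c g != 0] by rewrite inE.
  by rewrite S0 inE.
case: (pickP (fun g1 => (g1 != g0) && (c g1 != 0))) => [g1 /andP[ne nz] | none].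
  have [h hh] : exists h, beta h (g1 + s) != beta h (g0 + s).
    case: (boolP [exists h, beta h (g1 + s) != beta h (g0 + s)]) => [/existsP//|/existsPn H].
    exfalso; apply: hmin; exists (g1 + s), (g0 + s); split.
      by rewrite (inj_eq (addIr s)).
    by move=> x; apply/eqP; move: (H x); rewrite negbK.
  pose c' g := c g * (beta h (g + s) - beta h (g0 + s)) * alpha (g + s) h.
  apply: (IH c' (s + h)).
  - have sub : [set g | c' g != 0] \subset [set g | c g != 0] :\ g0.
      apply/subsetP => g; rewrite !inE /c'.
      case: (eqVneq g g0) => [->|_]; first by rewrite subrr mulr0 mul0r eqxx.
      by rewrite /= !mulf_eq0 !negb_or => /andP[/andP[]].
    rewrite (leq_trans (subset_leq_card sub)) //.
    have hg : g0 \in [set g | c g != 0] by rewrite inE.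
    by move: hcard; rewrite (cardsD1 g0) hg add1n.
  - set x := \sum_(g : G) c g *: X (g + s) in hx.
    have -> : \sum_(g : G) c' g *: X (g + (s + h)) =
              X h * x - beta h (g0 + s) *: (x * X h).
      rewrite /x mulr_sumr mulr_suml scaler_sumr -sumrB; apply: eq_bigr => g _.
      rewrite -scalerAr -scalerAl (hcomm _ _ _ _ (XA h) (XA (g + s))) hmul addrA.
      by rewrite !scalerA -scalerBl /c'; congr (_ *: _); ring.
    apply: rpredB; [| apply: rpredZ].
      by apply: (subvP hDI); apply: memv_mul => //; exact: XD.
    by apply: (subvP hIDr); apply: memv_mul => //; exact: XD.
  - exists g1; rewrite /c' !mulf_neq0 //; last by case: hcoc.
    by rewrite subr_eq0.
exists (g0 + s).
have E : \sum_(g : G) c g *: X (g + s) = c g0 *: X (g0 + s).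
  rewrite (bigD1 g0) //= big1 ?addr0 // => g ne.
  have := none g; rewrite ne /= => /negbFE/eqP ->; exact: scale0r.
rewrite E in hx.
by rewrite -(scalerK hg0 (X (g0 + s))); apply: rpredZ.
Qed.


Lemma D_simple : (D * D <= D)%VS -> simple_subalgebra D.
Proof.
move=> hDD; split => //.
  apply/eqP => H0; have := memv_mul (XD 0) (XD 0); rewrite H0 memv0 hmul addr0.
  by case: hcoc => hnz _; rewrite scaler_eq0 (negbTE (Xneq0 0)) (negbTE (hnz 0 0)).
move=> I hI; case: (eqVneq I 0%VS) => [->|nz]; [by left|right].
have hx := memv_pick I; set x := vpick I in hx.
have xnz : x != 0 by rewrite /x vpick0.
case: hI => hID hDI hIDr.
have [c hc] := @expand x (subvP hID _ hx).
have [g hg] : exists g, X g \in I.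
  apply: (@supp_ind I (And3 hID hDI hIDr) #|G| c 0).
  - exact: max_card.
  - by rewrite (eq_bigr (fun g => c g *: X g)) => [|g _]; [rewrite -hc | rewrite addr0].
  - case: (pickP (fun g => c g != 0)) => [g hg|none]; first by exists g.
    by move: xnz; rewrite hc big1 ?eqxx // => g _; move: (none g) => /negbFE/eqP ->; rewrite scale0r.
have anz : forall g h, alpha g h != 0 by case: hcoc.
have h0 : X 0 \in I.
  have := subvP hIDr _ (memv_mul hg (XD (- g))); rewrite hmul subrr.
  by rewrite -{2}(scalerK (anz g (- g)) (X 0)) => /(rpredZ (alpha g (- g))^-1).
apply/eqP; rewrite eqEsubv hID /=.
case/andP: hbas => /eqP <- _; apply/span_subvP => _ /mapP[h _ ->].
have := subvP hDI _ (memv_mul (XD 0) h0); rewrite hmul add0r.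
have := subvP hDI _ (memv_mul (XD h) h0); rewrite hmul addr0.
by rewrite -{2}(scalerK (anz h 0) (X h)) => /(rpredZ (alpha h 0)^-1).
Qed.


Lemma D_center : \dim 'Z(D)%VS = 1%N.
Proof.
have -> : 'Z(D)%VS = <[X 0%R]>%VS.
  apply/eqP; rewrite eqEsubv; apply/andP; split.
  - apply/subvP => z /memv_capP[zD /centvP zc].
    have [c hc] := @expand z zD.
    have c0 : forall g, g != 0 -> c g = 0.
      move=> g gnz; apply/eqP; apply: contraT => cg.
      exfalso; apply: hmin; exists g, 0; split => // h.
      rewrite beta0r.
      have E : \sum_(i : G) (c i * (beta h i - 1) * alpha i h) *: X (i + h) = 0.
        transitivity (X h * z - z * X h).
          rewrite hc mulr_sumr mulr_suml -sumrB; apply: eq_bigr => i _.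
          rewrite -scalerAr -scalerAl (hcomm _ _ _ _ (XA h) (XA i)) hmul.
          by rewrite !scalerA -scalerBl; congr (_ *: _); ring.
        by rewrite (zc _ (XD h)) subrr.
      move: (@uniq0s _ _ E g) => /eqP; rewrite !mulf_eq0 (negbTE cg) /=.
      case: hcoc => hnz _; rewrite (negbTE (hnz g h)) orbF subr_eq0.
      by move/eqP.
    rewrite hc (bigD1 0) //= big1 ?addr0 => [|g gnz]; last by rewrite c0 ?scale0r.
    exact: rpredZ (memv_line (X 0)).
  - rewrite -memvE; apply/memv_capP; split; first exact: XD.
    apply/centvP => v _; exact: central0 beta0l _ (XA 0) v.
by rewrite dim_vline Xneq0.
Qed.

End Aux.

Arguments central0 {K G A Ag beta} hgr hcomm hb0 {z} _ a.
Arguments beta0l {K G beta alpha} hcoc hind g.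
Arguments XA {K G A Ag D X} hXD g.
Arguments XD {K G A Ag D X} hXD g.
Arguments triple_zero {K A U V W} _.
Arguments mulX0 {K G A D alpha X} hcoc hbas hmul {d} _.
Arguments D_simple {K G A Ag beta} hcomm hmin {D alpha X} hcoc hXD hbas hmul _.
Arguments D_center {K G A Ag beta} hgr hcomm hmin {D alpha X} hcoc hind hXD hbas hmul.

Theorem mainTheorem7 (K : closedFieldType) (hK : [pchar K] =i pred0)
    (G : finZmodType) (A : falgType K)
    (Ag : G -> {vspace A}) (beta : G -> G -> K)
    (hreg : regular_grading Ag beta) (hmin : minimal_regular beta)
    (k : nat) (D : 'I_k -> {vspace A}) (J : {vspace A})
    (hJ : is_jacobson_radical J)
    (hsum : (\sum_(i < k) D i + J)%VS = fullv)
    (hdir : directv (\sum_(i < k) D i + J)%VS)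
    (hsub : forall i, graded_subalgebra Ag (D i))
    (hDD : forall i j, i != j -> (D i * D j)%VS = 0%VS)
    (hiso : forall i, exists alpha : G -> G -> K,
        [/\ cocycle alpha, induces alpha beta & graded_iso_twisted Ag (D i) alpha]) :
  (forall i, central_simple_subalgebra (D i)) /\
  (forall i j, i != j -> (D i * J * D j)%VS = 0%VS).
Proof.
case: hreg => hgr _ _ hcomm.
split.
  move=> i; have [alpha [hcoc hind [X [hXD hbas hmul]]]] := hiso i.
  split; last exact: (D_center hgr hcomm hmin hcoc hind hXD hbas hmul).
  by apply: (D_simple hcomm hmin hcoc hXD hbas hmul); case: (hsub i).
move=> i j ne.
have [al [hcoc hind [X [hXD hbas hmul]]]] := hiso i.
have [al' [hcoc' hind' [Y [hYD hbas' hmul']]]] := hiso j.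
apply/eqP; rewrite -subv0; apply: triple_zero => d a d' hd _ hd'.
have hb0 := beta0l hcoc hind.
have cX := central0 hgr hcomm hb0 (XA hXD 0).
have cY := central0 hgr hcomm hb0 (XA hYD 0).
have XY : X 0 * Y 0 = 0.
  apply/eqP; rewrite -memv0 -(hDD _ _ ne).
  by apply: memv_mul; [exact: XD hXD 0 | exact: XD hYD 0].
have E : (d * X 0) * a * (Y 0 * d') = 0.
  by rewrite -!mulrA (mulrA (X 0)) (cX a) -mulrA (mulrA (X 0)) XY mul0r !mulr0.
move: E; rewrite (mulX0 hcoc hbas hmul hd) cY (mulX0 hcoc' hbas' hmul' hd').
rewrite -scalerAl -scalerAr -scalerAl scalerA => /eqP.
rewrite scaler_eq0 mulf_eq0; case: hcoc => n1 _; case: hcoc' => n2 _.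
by rewrite (negbTE (n1 0 0)) (negbTE (n2 0 0)) /= => /eqP.
Qed.
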